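(* Let $t \ge 3$ be an integer and let $G$ be a block graph. Then $\mathrm{CF}_t(G)$ is $(t-2)$-decomposable and hence shellable.
   Context: All graphs are finite and simple. A block of a graph is a maximal connected subgraph that remains connected after removal of any single vertex; $G$ is a block graph if every block is a complete graph. $\mathrm{CF}_t(G)$ is the simplicial complex on $V(G)$ whose faces are the subsets $A\subseteq V(G)$ such that $G[A]$ contains no clique on $t$ vertices. For a simplicial complex $\Delta$ on $V$ and a face $F$: $\operatorname{link}_\Delta(F) = \{F' : F'\cap F=\emptyset, F'\cup F\in\Delta\}$, $\Delta\setminus F = \{H\in\Delta : H\cap F=\emptyset\}$, $\dim F=|F|-1$. A face $\sigma$ is a shedding face if for every $\tau\in\Delta$ with $\sigma\subseteq\tau$ and every $v\in\sigma$ there is $w\in V\setminus\tau$ with $(\tau\cup\{w\})\setminus\{v\}\in\Delta$. $\Delta$ is $k$-decomposable if it is a simplex (including $\emptyset$, $\{\emptyset\}$) or has a shedding face $\sigma$ with $\dim\sigma\le k$ such that $\Delta\setminus\sigma$ and $\operatorname{link}_\Delta(\sigma)$ are $k$-decomposable. $\Delta$ is shellable if its facets admit an order $F_1,\dots,F_s$ such that for all $i<j$ there exist $v\in F_j\setminus F_i$ and $\ell<j$ with $F_j\setminus F_\ell=\{v\}$. *)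

(* Defs.v *)
(* A finite simple graph is a symmetric irreflexive relation
   e on a finType T (vertex set = all of T). Simplicial complexes on V(G)=T are
   represented by their set of faces : {set {set T}}. *)
From mathcomp Require Import all_boot.
Set Implicit Arguments. Unset Strict Implicit. Unset Printing Implicit Defensive.

Section Defs.
Variable T : finType.

Variable e : rel T.

(* the induced subgraph G[S] is connected (the empty graph counts as connected) *)
Definition induced_connected (S : {set T}) : bool :=
  [forall x in S, forall y in S,
     connect [rel a b | [&& e a b, a \in S & b \in S]] x y].

Definition block_like (S : {set T}) : bool :=
  induced_connected S && [forall v in S, induced_connected (S :\ v)].

(* blocks: maximal such subgraphs (maximal ones are automatically induced) *)
Definition is_block (S : {set T}) : bool :=
  block_like S && [forall S' : {set T}, (S \subset S') && block_like S' ==> (S' == S)].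

Definition clique (S : {set T}) : bool :=
  [forall x in S, forall y in S, (x != y) ==> e x y].

Definition block_graph : Prop := forall S : {set T}, is_block S -> clique S.

Definition CF (t : nat) : {set {set T}} :=
  [set A : {set T} | ~~ [exists B : {set T}, [&& B \subset A, #|B| == t & clique B]]].

End Defs.

Section Complexes.
Variable T : finType.
Implicit Types (D : {set {set T}}) (F : {set T}).

Definition link D F : {set {set T}} :=
  [set F' : {set T} | [disjoint F' & F] && (F' :|: F \in D)].

Definition deletion D F : {set {set T}} :=
  [set H in D | [disjoint H & F]].

(* simplex, including the void complex and {emptyset} *)
Definition is_simplex D : Prop := D = set0 \/ exists F, D = powerset F.

Definition shedding_face D (sigma : {set T}) : Prop :=
  sigma \in D /\
  forall tau : {set T}, tau \in D -> sigma \subset tau ->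
  forall v, v \in sigma -> exists2 w : T, w \notin tau & (w |: tau) :\ v \in D.

(* dim sigma <= k  <->  #|sigma| <= k+1 *)
Inductive k_decomposable (k : nat) : {set {set T}} -> Prop :=
| kdec_simplex D : is_simplex D -> k_decomposable k D
| kdec_shed D sigma : shedding_face D sigma -> #|sigma| <= k.+1 ->
    k_decomposable k (deletion D sigma) -> k_decomposable k (link D sigma) ->
    k_decomposable k D.

Definition facets D : {set {set T}} :=
  [set F in D | [forall G in D, (F \subset G) ==> (G == F)]].

Definition shellable D : Prop :=
  exists s : seq {set T}, perm_eq s (enum (facets D)) /\
    forall i j, i < j -> j < size s ->
      exists2 v, v \in nth set0 s j :\: nth set0 s i &
        exists2 l, l < j & nth set0 s j :\: nth set0 s l = [set v].

End Complexes.

(* Main.v *)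
Require Import Defs.
From mathcomp Require Import all_boot zify.
Set Implicit Arguments. Unset Strict Implicit. Unset Printing Implicit Defensive.

Section Graph.
Variable T : finType.
Variable e : rel T.
Hypothesis e_sym : symmetric e.
Hypothesis hG : block_graph e.
Implicit Types (Y S C : {set T}) (a b c : T).

Definition hr (Y : {set T}) : rel T := [rel a b | [&& e a b, a \in Y & b \in Y]].

Lemma hr_sym Y : symmetric (hr Y).
Proof.
move=> a b; rewrite /hr /= e_sym.
by case: (a \in Y); case: (b \in Y); rewrite ?andbF ?andbT.
Qed.

Lemma conn_sym Y a b : connect (hr Y) a b = connect (hr Y) b a.
Proof. exact: (sym_connect_sym (hr_sym Y)). Qed.

Lemma path_hr Y a p : path e a p -> {subset a :: p <= Y} -> path (hr Y) a p.
Proof.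
elim: p a => [|b p IH] a //= /andP[eab pb] sub.
apply/andP; split.
  by rewrite /hr /= eab (sub a) ?(sub b) // !inE eqxx ?orbT.
apply: IH => // y yin; apply: sub; by rewrite inE yin orbT.
Qed.

Lemma path_hr_e Y a p : path (hr Y) a p -> path e a p.
Proof. by apply: sub_path => x y /and3P[]. Qed.

Lemma path_hr_mem Y a p : path (hr Y) a p -> {subset p <= Y}.
Proof.
elim: p a => [|b p IH] a //= /andP[/and3P[_ _ bY] pb] y.
rewrite inE => /orP[/eqP -> //|]; exact: IH pb y.
Qed.

Lemma path_hr_head Y a b p : path (hr Y) a (b :: p) -> a \in Y.
Proof. by case/andP => /and3P[]. Qed.

Lemma conn_mono Y Y' a b : Y \subset Y' -> connect (hr Y) a b -> connect (hr Y') a b.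
Proof.
move=> sYY'; apply: connect_sub => x y /and3P[exy xY yY]; apply: connect1.
by rewrite /hr /= exy (subsetP sYY') // (subsetP sYY').
Qed.

Lemma notin_conn Y a b : a \notin Y -> connect (hr Y) a b -> b = a.
Proof.
move=> aY /connectP[[|c p]] //= /andP[/and3P[_ aY' _] _].
by rewrite aY' in aY.
Qed.

Lemma cutF Y a b c : connect (hr Y) a b -> ~~ connect (hr (Y :\ c)) a b ->
  b != c -> connect (hr (Y :\ b)) a c.
Proof.
case/connectP => p pth ->.
case/shortenP: pth => p' pth' uq _ ncon bc.
case: p' pth' uq ncon bc => [|b0 p1] pth' uq ncon bc.
  by rewrite /= connect0 in ncon.
have aY := path_hr_head pth'.
have memY : {subset a :: b0 :: p1 <= Y}.
  move=> y; rewrite inE => /orP[/eqP -> //|]; exact: path_hr_mem pth' y.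
case: (boolP (c \in a :: b0 :: p1)) => cin; last first.
  exfalso; move/negP: ncon; apply; apply/connectP; exists (b0 :: p1) => //.
  apply: path_hr; first exact: path_hr_e pth'.
  move=> y yin; rewrite !inE memY // andbT; apply/negP => /eqP yc.
  by rewrite -yc yin in cin.
move: cin; rewrite inE => /orP[/eqP -> | cin]; first exact: connect0.
move: pth' uq ncon bc memY; move: (b0 :: p1) cin => q cin.
case/splitPr: cin => p2 p3 pth' uq ncon bc memY.
have lastE : last a (p2 ++ c :: p3) = last c p3 by rewrite last_cat.
rewrite lastE in bc ncon *.
have bin : last c p3 \in p3.
  have := mem_last c p3; rewrite inE => /orP[/eqP h|//]; by rewrite h eqxx in bc.
have pr : path (hr Y) a (rcons p2 c).
  move: pth'; rewrite cat_path rcons_path => /andP[-> /=]; by case/andP.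
apply/connectP; exists (rcons p2 c); last by rewrite last_rcons.
apply: path_hr; first exact: path_hr_e pr.
move=> y yin; rewrite !inE.
have yY : y \in Y.
  apply: memY; move: yin; rewrite inE mem_rcons !inE => /orP[->//|/orP[/eqP ->|yp]].
    by rewrite mem_cat inE eqxx orbT orbT.
  by rewrite mem_cat yp orbT.
rewrite yY andbT; apply/negP => /eqP yb.
move: uq; rewrite -cat_cons cat_uniq => /and3P[_ /hasPn H _].
have bn : last c p3 \notin a :: p2 by apply: H; rewrite inE bin orbT.
move: yin; rewrite inE mem_rcons inE => /orP[/eqP ya| /orP[/eqP yc|yp]].
- by rewrite -yb ya inE eqxx in bn.
- by rewrite -yb yc eqxx in bc.
- by rewrite -yb inE yp orbT in bn.
Qed.

Lemma seq_conn Y h q : path (hr Y) h q ->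
  {in h :: q &, forall x y, connect (hr Y) x y}.
Proof.
move=> pth x y xin yin; apply: (connect_trans (y:=h)).
  by rewrite conn_sym; exact: path_connect pth x xin.
exact: path_connect pth y yin.
Qed.

Lemma icP S : (forall x y, x \in S -> y \in S -> connect (hr S) x y) ->
  induced_connected e S.
Proof.
move=> H; apply/forallP => x; apply/implyP => xS; apply/forallP => y.
apply/implyP => yS; exact: H.
Qed.

Lemma cycle_bl (c : seq T) : uniq c -> cycle e c -> block_like e [set x in c].
Proof.
move=> uc cc; apply/andP; split.
  case: c uc cc => [|a q] uc cc.
    by apply: icP => x y; rewrite inE.
  have pq : path e a q by move: cc => /= ; rewrite rcons_path => /andP[].
  have ph : path (hr [set x in a :: q]) a q by apply: path_hr => // y yin; rewrite inE.
  apply: icP => x y; rewrite !inE => xin yin; exact: seq_conn ph x y xin yin.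
apply/forallP => v; apply/implyP; rewrite inE => vin.
have hrot := rot_index vin.
have ur : uniq (v :: (drop (index v c).+1 c ++ take (index v c) c)) by rewrite -hrot rot_uniq.
have cr : cycle e (v :: (drop (index v c).+1 c ++ take (index v c) c)) by rewrite -hrot rot_cycle.
have memr : forall x, (x \in c) = (x \in v :: (drop (index v c).+1 c ++ take (index v c) c)).
  by move=> x; rewrite -hrot mem_rot.
move: ur cr memr; move: (drop _ _ ++ take _ _) => q.
case: q => [|h q'] ur cr memr.
  apply: icP => x y; rewrite !inE memr inE => /andP[/negbTE -> ] //.
have pq : path e h q' by move: cr => /= /andP[_]; rewrite rcons_path => /andP[].
have ph := path_hr (Y := [set x in c] :\ v) pq.
have ph' : path (hr ([set x in c] :\ v)) h q'.
  apply: ph => y yin; rewrite !inE memr inE yin orbT andbT.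
  apply/negP => /eqP yv; move: ur; rewrite /= -yv yin; by [].
apply: icP => x y; rewrite !inE !memr !inE => /andP[/negbTE -> xin] /andP[/negbTE -> yin].
exact: seq_conn ph' x y xin yin.
Qed.

Lemma exists_block C : block_like e C -> exists2 B, is_block e B & C \subset B.
Proof.
move=> bC.
have P0 : (C \subset C) && block_like e C by rewrite subxx bC.
case: (@arg_maxnP _ C (fun B : {set T} => (C \subset B) && block_like e B) (fun B : {set T} => #|B|) P0) => B /andP[CB bB] maxB.
exists B => //; rewrite /is_block bB /=.
apply/forallP => S'; apply/implyP => /andP[BS' bS'].
rewrite eq_sym eqEcard BS' /=; apply: maxB.
by rewrite (subset_trans CB BS') bS'.
Qed.

Lemma clique_e S x y : clique e S -> x \in S -> y \in S -> x != y -> e x y.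
Proof.
by move/forallP/(_ x)/implyP => H /H /forallP/(_ y)/implyP H2 /H2 /implyP.
Qed.

Lemma cliqueI S : (forall x y, x \in S -> y \in S -> x != y -> e x y) -> clique e S.
Proof.
move=> H; apply/forallP => x; apply/implyP => xS; apply/forallP => y.
apply/implyP => yS; apply/implyP; exact: H.
Qed.

Lemma clique_sub S (S' : {set T}) : S \subset S' -> clique e S' -> clique e S.
Proof.
move=> sub cl; apply: cliqueI => x y xS yS; apply: clique_e cl _ _;
  exact: (subsetP sub).
Qed.

Lemma cyc_adj Y v a b : v \notin Y -> e v a -> e v b -> a != b ->
  connect (hr Y) a b -> e a b.
Proof.
move=> vY eva evb ab /connectP[p pth bE].
move: pth bE; case/shortenP => p' pth' uq _ bE.
case: p' pth' uq bE => [|b0 p1] pth' uq bE.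
  by rewrite bE eqxx in ab.
have aY := path_hr_head pth'.
have memY : {subset a :: b0 :: p1 <= Y}.
  move=> y; rewrite inE => /orP[/eqP -> //|]; exact: path_hr_mem pth' y.
have cbl : block_like e [set x in v :: a :: b0 :: p1].
  apply: cycle_bl.
    rewrite cons_uniq uq andbT; apply/negP => vin.
    by rewrite (memY _ vin) in vY.
  rewrite /= eva /=.
  have := path_hr_e pth'; rewrite /= => /andP[-> pp] /=.
  rewrite rcons_path pp /=.
  by rewrite e_sym -[last b0 p1]/(last a (b0 :: p1)) -bE.
have [B isB sub] := exists_block cbl.
apply: (clique_e (hG isB)) ab; apply: (subsetP sub).
  by rewrite !inE eqxx ?orbT.
by rewrite inE bE; move: (mem_last a (b0 :: p1)); rewrite !inE => ->; rewrite orbT.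
Qed.

End Graph.

Section Shell.
Variable T : finType.
Implicit Types (D : {set {set T}}) (F G A H : {set T}).

Lemma facetsP D F : reflect (F \in D /\ forall G, G \in D -> F \subset G -> G = F)
  (F \in facets D).
Proof.
rewrite inE; apply: (iffP andP) => [[FD /forallP H] | [FD H]]; split => //.
  move=> G GD FG; move: (H G); rewrite GD FG /=; by move/eqP.
apply/forallP => G; apply/implyP => GD; apply/implyP => FG; by rewrite (H G GD FG).
Qed.

Lemma facet_exists D A : A \in D -> exists2 F, F \in facets D & A \subset F.
Proof.
move=> AD.
have P0 : (A \in D) && (A \subset A) by rewrite AD subxx.
case: (@arg_maxnP _ A (fun G => (G \in D) && (A \subset G)) (fun G => #|G|) P0)
  => F /andP[FD AF] maxF.
exists F => //; apply/facetsP; split => // G GD FG.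
apply/eqP; rewrite eq_sym eqEcard FG /=; apply: maxF; by rewrite GD (subset_trans AF FG).
Qed.

Lemma shell_simplex D : is_simplex D -> shellable D.
Proof.
case=> [->|[F ->]].
  exists [::]; split => //.
  have -> : facets set0 = set0 :> {set {set T}} by apply/setP => G; rewrite !inE.
  by rewrite enum_set0.
exists [:: F]; split.
  have -> : facets (powerset F) = [set F].
    apply/setP => G; rewrite in_set1; apply/facetsP/eqP => [[GD H]|->].
      by apply/esym; apply: H; [rewrite powersetE | rewrite -powersetE].
    split; first by rewrite powersetE.
    by move=> G0; rewrite powersetE => GF FG; apply/eqP; rewrite eqEsubset GF FG.
  by rewrite enum_set1.
by move=> i j ij /=; lia.
Qed.

Lemma deletion1 D x A : (A \in deletion D [set x]) = (A \in D) && (x \notin A).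
Proof. by rewrite inE disjoint_sym disjoints1. Qed.

Lemma link1 D x A : (A \in link D [set x]) = (x \notin A) && (x |: A \in D).
Proof. by rewrite inE disjoint_sym disjoints1 setUC. Qed.

Lemma setU1D x A B : x \notin A -> (x |: A) :\: (x |: B) = A :\: B.
Proof.
move=> xA; apply/setP => k; rewrite !inE; case: (eqVneq k x) => [->|] //=.
by rewrite (negbTE xA) andbF.
Qed.

Lemma shell_shed D x : shedding_face D [set x] -> shellable (deletion D [set x]) ->
  shellable (link D [set x]) -> shellable D.
Proof.
move=> [xD shed] [s1 [p1 H1]] [s2 [p2 H2]].
set Dl := deletion D [set x]; set Lk := link D [set x].
have shedx : forall tau, tau \in D -> x \in tau ->
    exists2 w, w \notin tau & (w |: tau) :\ x \in D.
  move=> tau tD xt; have sx : [set x] \subset tau by rewrite sub1set.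
  exact: shed tau tD sx x (set11 x).
have m1 : forall F, (F \in s1) = (F \in facets Dl) by move=> F; rewrite (perm_mem p1) mem_enum.
have m2 : forall F, (F \in s2) = (F \in facets Lk) by move=> F; rewrite (perm_mem p2) mem_enum.
have f1 : forall F, F \in facets Dl -> F \in facets D.
  move=> F /facetsP[FDl Fmax]; move: (FDl); rewrite deletion1 => /andP[FD xF].
  apply/facetsP; split => // H HD FH.
  case: (boolP (x \in H)) => xH; last by apply: Fmax => //; rewrite deletion1 HD.
  have [w wH wD] := shedx H HD xH.
  have wx : w != x by apply/negP => /eqP wx; rewrite wx xH in wH.
  have : (w |: H) :\ x = F.
    apply: Fmax; first by rewrite deletion1 wD !inE eqxx.
    apply/subsetP => k kF; rewrite !inE (subsetP FH k kF) orbT andbT.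
    by apply/negP => /eqP kx; rewrite -kx kF in xF.
  move=> E; exfalso; move: (subsetP FH w); rewrite -E !inE eqxx wx /= => /(_ isT).
  by rewrite (negbTE wH).
have f2 : forall G, G \in facets Lk -> x |: G \in facets D.
  move=> G /facetsP[GL Gmax]; move: (GL); rewrite link1 => /andP[xG xGD].
  apply/facetsP; split => // H HD GH.
  have xH : x \in H by apply: (subsetP GH); rewrite setU11.
  have : H :\ x = G.
    apply: Gmax; first by rewrite link1 !inE eqxx /= setD1K.
    apply/subsetP => k kG; rewrite !inE (subsetP GH) ?andbT; last by rewrite !inE kG orbT.
    by apply/negP => /eqP kx; rewrite -kx kG in xG.
  by move=> <-; rewrite setD1K.
have f3 : forall F, F \in facets D ->
    if x \in F then F :\ x \in facets Lk else F \in facets Dl.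
  move=> F /facetsP[FD Fmax]; case: ifP => xF.
    apply/facetsP; split; first by rewrite link1 !inE eqxx /= setD1K.
    move=> G; rewrite link1 => /andP[xG xGD] FG.
    have : x |: G = F.
      apply: Fmax xGD _; apply/subsetP => k kF.
      case: (eqVneq k x) => [->|kx]; first by rewrite setU11.
      by rewrite !inE (subsetP FG) ?orbT // !inE kx kF.
    by move=> E; rewrite -E setU1K.
  apply/facetsP; split; first by rewrite deletion1 FD xF.
  move=> G; rewrite deletion1 => /andP[GD _] FG; exact: Fmax.
have u1 : uniq s1 by rewrite (perm_uniq p1) enum_uniq.
have u2 : uniq s2 by rewrite (perm_uniq p2) enum_uniq.
have xs2 : forall G, G \in s2 -> x \notin G.
  by move=> G; rewrite m2 => /facetsP[]; rewrite link1 => /andP[].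
have xs1 : forall F, F \in s1 -> x \notin F.
  by move=> F; rewrite m1 => /facetsP[]; rewrite deletion1 => /andP[].
exists (s1 ++ map (fun G => x |: G) s2); split.
  apply: uniq_perm; last 2 first.
  - exact: enum_uniq.
  - move=> F; rewrite mem_cat mem_enum m1; apply/idP/idP.
      case/orP => [/f1 //|/mapP[G Gs2 ->]]; apply: f2; by rewrite -m2.
    move=> /f3; case: ifP => xF H; last by rewrite H.
    apply/orP; right; apply/mapP; exists (F :\ x); [by rewrite m2 | by rewrite setD1K].
  rewrite cat_uniq u1 /=; apply/andP; split.
    apply/hasPn => F /mapP[G Gs2 ->]; apply/negP => /xs1; by rewrite setU11.
  rewrite map_inj_in_uniq // => G1 G2 G1s G2s E.
  by rewrite -(setU1K (xs2 _ G1s)) E setU1K // xs2.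
set n1 := size s1.
set s := s1 ++ map (fun G => x |: G) s2.
have nthl : forall k, k < n1 -> nth set0 s k = nth set0 s1 k.
  by move=> k kn; rewrite /s nth_cat -/n1 kn.
have nthr : forall k, k < n1 + size s2 -> n1 <= k -> nth set0 s k = x |: nth set0 s2 (k - n1).
  move=> k klt kn; rewrite /s nth_cat -/n1 ltnNge kn /= (nth_map set0) //.
  by rewrite ltn_subLR.
move=> i j ij; rewrite size_cat size_map -/n1 => jlt.
case: (ltnP j n1) => jn1.
  have in1 : i < n1 by apply: ltn_trans ij jn1.
  have [v vin [l lj E]] := H1 i j ij jn1.
  exists v; first by rewrite nthl // nthl.
  exists l => //; rewrite nthl // nthl //; exact: ltn_trans lj jn1.
case: (ltnP i n1) => in1.
  set Gj := nth set0 s2 (j - n1).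
  have Gjs : Gj \in s2 by apply: mem_nth; rewrite ltn_subLR.
  have Fis : nth set0 s1 i \in s1 by apply: mem_nth.
  have xGj := xs2 _ Gjs.
  have : Gj \in Lk by move: Gjs; rewrite m2 => /facetsP[].
  rewrite link1 => /andP[_ xGjD].
  have [w wn wD] := shedx _ xGjD (setU11 x Gj).
  have AD : (w |: (x |: Gj)) :\ x \in Dl by rewrite deletion1 wD !inE eqxx.
  have [F' F'f AF'] := facet_exists AD.
  have F's : F' \in s1 by rewrite m1.
  have xF' := xs1 _ F's.
  have iF : index F' s1 < n1 by rewrite index_mem.
  exists x.
    by rewrite nthr // nthl // !inE eqxx xs1.
  exists (index F' s1); first exact: leq_trans iF jn1.
  rewrite nthr // nthl // nth_index //; apply/setP => k; rewrite !inE.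
  case: (eqVneq k x) => [->|kx] /=; first by rewrite xF'.
  apply/negP => /andP[kF' kG]; move/negP: kF'; apply; apply: (subsetP AF').
  by rewrite !inE kx kG !orbT.
have a1 : i - n1 < j - n1 by lia.
have a2 : j - n1 < size s2 by lia.
have [v vin [l lj E]] := H2 (i - n1) (j - n1) a1 a2.
have Gjs : nth set0 s2 (j - n1) \in s2 by apply: mem_nth.
have a3 : i < n1 + size s2 by lia.
exists v.
  by rewrite nthr // nthr // setU1D ?xs2.
have a4 : n1 + l < j by lia.
have a5 : n1 + l - n1 = l by lia.
exists (n1 + l) => //.
rewrite nthr // nthr ?leq_addr ?a5 //; last by lia.

by rewrite setU1D ?xs2.
Qed.
End Shell.

Section Main.
Variable T : finType.
Variable e : rel T.
Hypothesis e_sym : symmetric e.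
Hypothesis hG : block_graph e.
Variable t : nat.
Hypothesis ht : 3 <= t.
Implicit Types (W S X A B K Q : {set T}).

Lemma CFP A : reflect (forall B, B \subset A -> #|B| = t -> clique e B -> False)
  (A \in CF e t).
Proof.
rewrite inE; apply: (iffP negP).
  move=> H B BA cB clB; apply: H; apply/existsP; exists B.
  by rewrite BA cB eqxx clB.
move=> H /existsP[B /and3P[BA /eqP cB clB]]; exact: H BA cB clB.
Qed.

Lemma CF_sub A (A' : {set T}) : A \subset A' -> A' \in CF e t -> A \in CF e t.
Proof.
move=> sub /CFP H; apply/CFP => B BA; apply: H; exact: subset_trans BA sub.
Qed.

Definition L W S := [set A : {set T} | (A \subset W) && (A :|: S \in CF e t)].

Definition tcl2 X z k := [exists K : {set T},
  [&& K \subset X, #|K| == t, clique e K, z \in K & k \in K]].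

Lemma tcl2I X K z k : K \subset X -> #|K| = t -> clique e K -> z \in K -> k \in K ->
  tcl2 X z k.
Proof. by move=> KX cK clK zK kK; apply/existsP; exists K; rewrite KX cK eqxx clK zK kK. Qed.

Lemma extend X K z k : K \subset X -> #|K| = t -> clique e K -> z \in X ->
  (forall k', k' \in K -> k' != z -> e z k') -> k \in K -> tcl2 X z k.
Proof.
move=> KX cK clK zX H kK.
case: (boolP (z \in K)) => zK; first exact: tcl2I KX cK clK zK kK.
have : K :\ k != set0.
  apply/negP => /eqP h; move: (cardsD1 k K); rewrite h cards0 kK cK => ht1.
  by move: ht; rewrite ht1.
case/set0Pn => k' ; rewrite !inE => /andP[k'k k'K].
apply: (tcl2I (K := z |: (K :\ k'))).
- apply/subsetP => y; rewrite !inE => /orP[/eqP -> //|/andP[_ yK]]; exact: (subsetP KX).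
- rewrite cardsU1 !inE negb_and zK orbT /=.
  by move: (cardsD1 k' K); rewrite k'K cK add1n => ->.
- apply: cliqueI => x y; rewrite !inE => /orP[/eqP ->|/andP[_ xK]] /orP[/eqP ->|/andP[_ yK]].
  + by rewrite eqxx.
  + move=> _; apply: H => //; apply/negP => /eqP yz; by rewrite -yz yK in zK.
  + move=> _; rewrite e_sym; apply: H => //; apply/negP => /eqP xz; by rewrite -xz xK in zK.
  + exact: clique_e clK xK yK.
- by rewrite setU11.
- by rewrite !inE kK andbT; apply/orP; right; rewrite eq_sym.
Qed.


Lemma tcl2_sym X z k : tcl2 X z k -> tcl2 X k z.
Proof.
by case/existsP => K /and5P[KX cK clK zK kK]; apply/existsP; exists K; rewrite KX cK clK zK kK.
Qed.

Lemma other W S X y K : X = W :|: S -> (y |: S \in CF e t) -> K \subset X -> #|K| = t ->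
  clique e K -> y \in K -> exists2 z, z \in K & (z \in W) && (z != y).
Proof.
move=> hX N1y KX cK clK yK.
have : ~~ (K \subset y |: S).
  by apply/negP => sub; move/CFP: N1y => /(_ K sub cK clK).
case/subsetPn => z zK; rewrite !inE negb_or => /andP[zy zS].
exists z => //; rewrite zy andbT.
by move: (subsetP KX z zK); rewrite hX inE (negbTE zS) orbF.
Qed.

Lemma shed_exists W S X : X = W :|: S -> [disjoint W & S] -> S \in CF e t ->
  (forall x, x \in W -> x |: S \in CF e t) -> X \notin CF e t ->
  exists2 x, x \in W & shedding_face (L W S) [set x].
Proof.
move=> hX dWS hS N1 nCF.
have WX : W \subset X by rewrite hX; apply: subsetUl.
have [K0 [K0X cK0 clK0]] : exists K, [/\ K \subset X, #|K| = t & clique e K].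
  by move: nCF; rewrite inE negbK => /existsP[K /and3P[KX /eqP cK clK]]; exists K.
have [r rK rW] : exists2 r, r \in K0 & r \in W.
  have : ~~ (K0 \subset S) by apply/negP => sub; move/CFP: hS => /(_ K0 sub cK0 clK0).
  case/subsetPn => r rK rS; exists r => //.
  by move: (subsetP K0X r rK); rewrite hX inE (negbTE rS) orbF.
have rX : r \in X by apply: (subsetP WX).
pose Bs u := [set y in W | [&& tcl2 X y y, connect (hr e X) r y, y != u &
   ~~ connect (hr e (X :\ u)) r y]].
have BsE : forall u y, (y \in Bs u) = [&& y \in W, tcl2 X y y, connect (hr e X) r y, y != u &
   ~~ connect (hr e (X :\ u)) r y] by move=> u0 y; rewrite inE.
have Br : Bs r != set0.
  have [z1 z1K /andP[z1W z1r]] := other hX (N1 r rW) K0X cK0 clK0 rK.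
  apply/set0Pn; exists z1; rewrite BsE z1W z1r (tcl2I K0X cK0 clK0 z1K z1K) /=.
  have z1X := subsetP K0X z1 z1K.
  apply/andP; split.
    apply: connect1; rewrite /hr /= rX z1X !andbT.
    by apply: (clique_e clK0 rK z1K); rewrite eq_sym.
  apply/negP => /notin_conn h.
  have := h (_ : r \notin X :\ r); rewrite !inE eqxx /= => /(_ isT) /eqP.
  by rewrite (negbTE z1r).
case: (@arg_minnP _ r (fun u => (u \in X) && (Bs u != set0)) (fun u => #|Bs u|))
  => [|u /andP[uX Bu] minu]; first by rewrite rX Br.
have claim3 : forall z, z \in Bs u -> Bs z = set0.
  move=> z; rewrite BsE => /and5P[zW zt crz zu ncz].
  apply/eqP; apply/negPn/negP => Bz.
  have sub : Bs z \subset Bs u.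
    apply/subsetP => y; rewrite !BsE => /and5P[yW yt cry yz ncy].
    rewrite yW yt cry /=.
    have yu : y != u.
      apply/negP => /eqP yu; rewrite yu in ncy cry.
      move/negP: ncz; apply; apply: cutF => //; by rewrite eq_sym.
    rewrite yu /=; apply/negP => cy.
    have ncy' : ~~ connect (hr e ((X :\ u) :\ z)) r y.
      apply/negP => h; move/negP: ncy; apply; apply: conn_mono h.
      by apply/subsetP => k; rewrite !inE => /andP[-> /andP[_ ->]].
    have := cutF cy ncy' yz => h.
    move/negP: ncz; apply; apply: conn_mono h; exact: subD1set.
  have : #|Bs z| < #|Bs u|.
    apply: proper_card; apply/properP; split => //; exists z.
      by rewrite BsE zW zt crz zu ncz.
    by rewrite BsE eqxx /= !andbF.
  by rewrite ltnNge minu // (subsetP WX) // Bz.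
have [z zB] : exists z, z \in Bs u by apply/set0Pn.
have Bz0 := claim3 z zB.
move: (zB); rewrite BsE => /and5P[zW zt crz zu ncz].
have zX : z \in X := subsetP WX z zW.
have sep : forall y a b, y \in W -> connect (hr e X) r y -> Bs y = set0 ->
    tcl2 X y a -> tcl2 X y b -> a != b -> e a b.
  move=> y a b yW cry By /existsP[K1 /and5P[K1X /eqP cK1 clK1 yK1 aK1]].
  move=> /existsP[K2 /and5P[K2X /eqP cK2 clK2 yK2 bK2]] ab.
  case: (eqVneq a y) => [ay|ay].
    by rewrite ay; apply: (clique_e clK2 yK2 bK2); rewrite -ay.
  case: (eqVneq b y) => [by_|by_].
    by rewrite by_; exact: clique_e clK1 aK1 yK1 ay.
  have yX : y \in X := subsetP WX y yW.
  have hz : forall z' K, K \subset X -> #|K| = t -> clique e K -> y \in K ->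
      z' \in K -> z' \in W -> z' != y -> connect (hr e (X :\ y)) r z'.
    move=> z' K KX cK clK yK z'K z'W z'y.
    have z'X := subsetP KX z' z'K.
    have cz' : connect (hr e X) r z'.
      apply: (connect_trans cry); apply: connect1; rewrite /hr /= yX z'X !andbT.
      by apply: (clique_e clK yK z'K); rewrite eq_sym.
    apply/negPn/negP => nc.
    have : z' \in Bs y by rewrite BsE z'W (tcl2I KX cK clK z'K z'K) cz' z'y nc.
    by rewrite By inE.
  have [z1 z1K /andP[z1W z1y]] := other hX (N1 y yW) K1X cK1 clK1 yK1.
  have [z2 z2K /andP[z2W z2y]] := other hX (N1 y yW) K2X cK2 clK2 yK2.
  have c1 := hz z1 K1 K1X cK1 clK1 yK1 z1K z1W z1y.
  have c2 := hz z2 K2 K2X cK2 clK2 yK2 z2K z2W z2y.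
  have ha : connect (hr e (X :\ y)) a z1.
    case: (eqVneq a z1) => [->|az1]; first exact: connect0.
    apply: connect1; rewrite /hr /= !inE ay z1y (subsetP K1X a aK1) (subsetP K1X z1 z1K) !andbT.
    exact: clique_e clK1 aK1 z1K az1.
  have hb : connect (hr e (X :\ y)) z2 b.
    case: (eqVneq z2 b) => [->|z2b]; first exact: connect0.
    apply: connect1; rewrite /hr /= !inE by_ z2y (subsetP K2X b bK2) (subsetP K2X z2 z2K) !andbT.
    exact: clique_e clK2 z2K bK2 z2b.
  apply: (cyc_adj e_sym hG (Y := X :\ y) (v := y)).
  - by rewrite !inE eqxx.
  - by apply: (clique_e clK1 yK1 aK1); rewrite eq_sym.
  - by apply: (clique_e clK2 yK2 bK2); rewrite eq_sym.
  - exact: ab.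
  apply: (connect_trans ha); apply: (connect_trans _ hb).
  by apply: (connect_trans _ c2); rewrite conn_sym.
case/existsP: (zt) => Kz /and5P[KzX /eqP cKz clKz zKz _].
pose Q := [set k | tcl2 X z k].
have zQ : z \in Q by rewrite inE.
have KzQ : Kz \subset Q.
  by apply/subsetP => k kK; rewrite inE; exact: tcl2I KzX cKz clKz zKz kK.
have Qcl : clique e Q.
  apply: cliqueI => a b; rewrite !inE => ha hb ab; exact: sep z a b zW crz Bz0 ha hb ab.
have free : forall y, y \in Q -> y \in W -> y != u -> forall K, K \subset X ->
    #|K| = t -> clique e K -> y \in K -> K \subset Q.
  move=> y yQ yW yu K KX cK clK yK.
  have yX := subsetP WX y yW.
  have cry : connect (hr e X) r y.
    case: (eqVneq z y) => [<-|zy']; first exact: crz.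
    apply: (connect_trans crz); apply: connect1; rewrite /hr /= zX yX !andbT.
    exact: clique_e Qcl zQ yQ zy'.
  have yB : y \in Bs u.
    rewrite BsE yW (tcl2I KX cK clK yK yK) cry yu /=.
    case: (eqVneq z y) => [<-|zy']; first exact: ncz.
    apply/negP => cy; move/negP: ncz; apply; apply: (connect_trans cy).
    apply: connect1; rewrite /hr /= !inE yu zu yX zX !andbT.
    by rewrite e_sym; exact: clique_e Qcl zQ yQ zy'.
  have By := claim3 y yB.
  apply/subsetP => k kK; rewrite inE.
  apply: (extend KX cK clK zX _ kK) => k' k'K k'z.
  apply: (sep y z k' yW cry By).
  - by apply: tcl2_sym; rewrite inE in yQ.
  - exact: tcl2I KX cK clK yK k'K.
  - by rewrite eq_sym.
pose x := if u \in Q :&: W then u else z.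
have xQW : x \in Q :&: W by rewrite /x; case: ifP => // _; rewrite inE zQ zW.
have freex : forall y, y \in Q :&: W -> y != x -> forall K, K \subset X ->
    #|K| = t -> clique e K -> y \in K -> K \subset Q.
  move=> y yQW yx; move: (yQW); rewrite inE => /andP[yQ yW]; apply: free yQ yW _.
  move: yx; rewrite /x; case: ifP => [_ //|uQW yz].
  by apply/negP => /eqP yu; rewrite -yu yQW in uQW.
move: (xQW); rewrite inE => /andP[xQ xW].
have xnS : x \notin S by rewrite (disjointFr dWS xW).
exists x => //; split.
  by rewrite inE sub1set xW /=; exact: N1 x xW.
move=> tau; rewrite inE => /andP[tauW tauCF]; rewrite sub1set => xtau v.
rewrite inE => /eqP ->.
have [y yF ytau] : exists2 y, y \in (Q :&: W) :\ x & y \notin tau.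
  apply/subsetPn; apply/negP => sub.
  move/CFP: tauCF; apply; [|exact: cKz|exact: clKz].
  apply/subsetP => k kK; have := subsetP KzX k kK; rewrite hX !inE.
  case/orP => [kW|->]; last by rewrite orbT.
  case: (eqVneq k x) => [->|kx]; first by rewrite xtau.
  apply/orP; left; apply: (subsetP sub); rewrite !inE kx kW andbT /=.
exact: tcl2I KzX cKz clKz zKz kK.
move: (yF); rewrite !inE => /andP[yx /andP[yQ yW]].
have yQW : y \in Q :&: W by rewrite !inE yQ yW.
exists y => //; rewrite inE; apply/andP; split.
  apply/subsetP => k; rewrite !inE => /andP[_ /orP[/eqP->|ktau]] //.
  exact: (subsetP tauW k ktau).
apply/CFP => B Bsub cB clB.
case: (boolP (y \in B)) => yB.
  have BX : B \subset X.
    apply/subsetP => k kB; move: (subsetP Bsub k kB); rewrite hX !inE.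
    case/orP => [/andP[_ /orP[/eqP ->|kt]]|->]; [by rewrite yW | | by rewrite orbT].
    by rewrite (subsetP tauW).
  have BQ := freex y yQW yx B BX cB clB yB.
  have xB : x \notin B.
    apply/negP => xB; move: (subsetP Bsub x xB); rewrite !inE eqxx /=.
    by rewrite (negbTE xnS).
  move/CFP: tauCF => tauCF'; apply: (tauCF' (x |: (B :\ y))).
  - apply/subsetP => k; rewrite !inE => /orP[/eqP->|/andP[ky kB]].
      by rewrite xtau.
    move: (subsetP Bsub k kB); rewrite !inE (negbTE ky) /=.
    by case/orP => [/andP[_ ->] //|->]; rewrite orbT.
  - rewrite cardsU1 !inE (negbTE xB) andbF /=.
    by move: (cardsD1 y B); rewrite yB cB add1n => ->.
  - apply: (clique_sub _ Qcl); apply/subsetP => k.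
    by case/setU1P => [->|/setD1P[_ kB]]; [exact: xQ | exact: (subsetP BQ)].
move/CFP: tauCF => tauCF'; apply: (tauCF' B _ cB clB); apply/subsetP => k kB.
move: (subsetP Bsub k kB); rewrite !inE.
case/orP => [/andP[_ /orP[/eqP ky|->]]|->] //; last by rewrite orbT.
by rewrite -ky kB in yB.
Qed.

Lemma LE W S A : (A \in L W S) = (A \subset W) && (A :|: S \in CF e t).
Proof. by rewrite inE. Qed.

Lemma L_simplex W S : (W :|: S) \in CF e t -> L W S = powerset W.
Proof.
move=> hX; apply/setP => A; rewrite LE powersetE.
case: (boolP (A \subset W)) => AW //=; apply: CF_sub hX; exact: setSU.
Qed.

Lemma L_ghost W S x : x \in W -> x |: S \notin CF e t -> L W S = L (W :\ x) S.
Proof.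
move=> xW nx; apply/setP => A; rewrite !LE subsetD1.
case: (boolP (A :|: S \in CF e t)) => ACF; rewrite ?andbF ?andbT //.
case: (boolP (x \in A)) => xA; rewrite ?andbT ?andbF //.
apply/negP => _; move/negP: nx; apply; apply: CF_sub ACF.
by apply: setSU; rewrite sub1set.
Qed.

Lemma L_del W S x : deletion (L W S) [set x] = L (W :\ x) S.
Proof.
apply/setP => A; rewrite deletion1 !LE subsetD1.
by case: (A \subset W); case: (x \in A); case: (A :|: S \in CF e t).
Qed.

Lemma L_link W S x : x \in W -> link (L W S) [set x] = L (W :\ x) (x |: S).
Proof.
move=> xW; apply/setP => A; rewrite link1 !LE subsetD1 subUset sub1set xW /=.
rewrite [A :|: (x |: S)]setUA [A :|: [set x]]setUC.
by case: (A \subset W); case: (x \in A).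
Qed.

Lemma main_ind n : forall W S, #|W| < n -> [disjoint W & S] -> S \in CF e t ->
  k_decomposable (t - 2) (L W S) /\ shellable (L W S).
Proof.
elim: n => [//|n IH] W S Wn dWS hS.
case: (boolP ((W :|: S) \in CF e t)) => hX.
  rewrite (L_simplex hX); split.
    by apply: kdec_simplex; right; exists W.
  by apply: shell_simplex; right; exists W.
have smaller : forall x, x \in W -> #|W :\ x| < n.
  move=> x xW; rewrite ltnS in Wn; apply: leq_trans Wn.
  by rewrite [#|W|](cardsD1 x W) xW add1n ltnSn.
have dsub : forall x, [disjoint W :\ x & S] by move=> x; apply: disjointWl dWS; exact: subD1set.
case: (boolP [exists x in W, x |: S \notin CF e t]) => hB.
  case/existsP: hB => x /andP[xW nx]; rewrite (L_ghost xW nx).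
  exact: IH (smaller x xW) (dsub x) hS.
have N1 : forall x, x \in W -> x |: S \in CF e t.
  move=> x xW; apply/negPn/negP => h; move/negP: hB; apply; apply/existsP; exists x.
  by rewrite xW h.
have [x xW sh] := shed_exists (erefl _) dWS hS N1 hX.
have dl : [disjoint W :\ x & x |: S].
  rewrite disjoints_subset; apply/subsetP => k; rewrite !inE => /andP[kx kW].
  rewrite negb_or kx /=; move: dWS; rewrite disjoints_subset => /subsetP/(_ k kW).
  by rewrite inE.
have [IHd1 IHd2] := IH (W :\ x) S (smaller x xW) (dsub x) hS.
have [IHl1 IHl2] := IH (W :\ x) (x |: S) (smaller x xW) dl (N1 x xW).
split.
  apply: (kdec_shed sh); first by rewrite cards1.
    by rewrite L_del.
  by rewrite L_link.
apply: (shell_shed sh); first by rewrite L_del.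
by rewrite L_link.
Qed.
End Main.

Theorem corollary3p4 (T : finType) (e : rel T) (e_sym : symmetric e)
  (e_irr : irreflexive e) (t : nat) (ht : 3 <= t) (hG : block_graph e) :
  k_decomposable (t - 2) (CF e t) /\ shellable (CF e t).
Proof.
have -> : CF e t = L e t setT set0.
  apply/setP => A; rewrite LE subsetT setU0 //.
have h0 : set0 \in CF e t.
  apply/CFP => B; rewrite subset0 => /eqP -> ; rewrite cards0 => t0.
  by move: ht; rewrite -t0.
apply: (main_ind e_sym hG ht (n := #|[set: T]|.+1)) => //.
by rewrite disjoints_subset; apply/subsetP => k; rewrite !inE.
Qed.
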